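(* Let $(\mathscr{S},\mathscr{C},\mathscr{R},K)$ be a PL-RDK system with kinetic order vectors $T_{.y}$. Suppose there exist $\kappa\in\mathbb{R}^{\mathscr{R}}_{>0}$ and a nonzero $\mu\in\mathbb{R}^{\mathscr{S}}$ that is stoichiometrically compatible with $S$ such that $$\sum_{y\to y'\in\mathscr{R}}\kappa_{y\to y'}(y'-y)=0,\qquad \sum_{y\to y'\in\mathscr{R}}\kappa_{y\to y'}e^{T_{.y}\cdot\mu}(y'-y)=0.$$ Then there exist positive rate constants $\{k_{y\to y'}\}_{y\to y'\in\mathscr{R}}$ (with the kinetic orders unchanged) and two distinct positive, stoichiometrically compatible vectors $c^*,c^{**}\in\mathbb{R}^{\mathscr{S}}_{>0}$ which are both equilibria of the resulting power-law system.
   Context: A chemical reaction network $(\mathscr{S},\mathscr{C},\mathscr{R})$ has finite sets of species, complexes (vectors in $\mathbb{R}^{\mathscr{S}}_{\ge0}$) and reactions $y\to y'$; its stoichiometric subspace is $S=\mathrm{span}\{y'-y: y\to y'\in\mathscr{R}\}$. A power-law kinetics assigns to each reaction $r$ the rate $K_r(x)=k_r x^{F_r}=k_r\prod_s x_s^{F_{rs}}$ with rate constant $k_r>0$ and real kinetic order row $F_r\in\mathbb{R}^{\mathscr{S}}$. The system is PL-RDK (power-law reactant-determined kinetics) if any two reactions with the same reactant complex have identical kinetic order rows; then for each reactant complex $y$ one writes $T_{.y}\in\mathbb{R}^{\mathscr{S}}$ for this common row. The dynamics is $dx/dt=f(x)=\sum_{y\to y'\in\mathscr{R}}k_{y\to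 y'}x^{T_{.y}}(y'-y)$; an equilibrium is a zero of $f$. Two vectors $x,x^*$ are stoichiometrically compatible if $x-x^*\in S$. A vector $x\in\mathbb{R}^{\mathscr{S}}$ is stoichiometrically compatible with $S$ if there is $\sigma\in S$ with $\mathrm{sign}(x_s)=\mathrm{sign}(\sigma_s)$ for all $s\in\mathscr{S}$. *)

(* Defs.v *)
From Stdlib Require Export Reals List.
Export ListNotations.
Open Scope R_scope.

(* Species are indexed by 0..n-1; a vector in R^S is a function nat -> R,
   of which only the components s < n are meaningful. *)
Definition Vec := nat -> R.

(* A reaction y -> y' is the pair (reactant complex y, product complex y'). *)
Definition Reaction := (Vec * Vec)%type.

Definition sumR (l : list R) : R := fold_right Rplus 0 l.

Definition dot (n : nat) (u v : Vec) : R :=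
  sumR (map (fun s => u s * v s) (seq 0 n)).

Definition is_network (n : nat) (rxns : list Reaction) : Prop :=
  NoDup rxns /\
  (forall r, In r rxns ->
     (forall s, (s < n)%nat -> 0 <= fst r s /\ 0 <= snd r s) /\
     (exists s, (s < n)%nat /\ fst r s <> snd r s)).

Definition reaction_sum (rxns : list Reaction) (c : Reaction -> R) (s : nat) : R :=
  sumR (map (fun r => c r * (snd r s - fst r s)) rxns).

Definition in_stoich (n : nat) (rxns : list Reaction) (v : Vec) : Prop :=
  exists a : Reaction -> R, forall s, (s < n)%nat -> v s = reaction_sum rxns a s.

Definition sgn (x : R) : R :=
  if Rlt_dec 0 x then 1 else if Rlt_dec x 0 then -1 else 0.

(* x is stoichiometrically compatible with S: same sign pattern as some sigma in S *)
Definition sign_compatible (n : nat) (rxns : list Reaction) (x : Vec) : Prop :=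
  exists sigma : Vec, in_stoich n rxns sigma /\
    forall s, (s < n)%nat -> sgn (x s) = sgn (sigma s).

(* power-law monomial x^F = prod_s x_s^{F_s}, for positive x *)
Definition monomial (n : nat) (x F : Vec) : R :=
  fold_right Rmult 1 (map (fun s => Rpower (x s) (F s)) (seq 0 n)).

(* PL-RDK dynamics: kinetic order row T y depends only on the reactant complex y *)
Definition plrdk_rhs (n : nat) (rxns : list Reaction) (T : Vec -> Vec)
    (k : Reaction -> R) (x : Vec) (s : nat) : R :=
  reaction_sum rxns (fun r => k r * monomial n x (T (fst r))) s.

Definition is_equilibrium (n : nat) (rxns : list Reaction) (T : Vec -> Vec)
    (k : Reaction -> R) (x : Vec) : Prop :=
  forall s, (s < n)%nat -> plrdk_rhs n rxns T k x s = 0.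

(* Main.v *)
Require Import Defs.
From Stdlib Require Import Reals List Lra Lia.
Open Scope R_scope.

Lemma sgn_eq a b : sgn a = sgn b ->
  (0 < a -> 0 < b) /\ (a < 0 -> b < 0) /\ (a = 0 -> b = 0).
Proof.
  unfold sgn; destruct (Rlt_dec 0 a), (Rlt_dec a 0), (Rlt_dec 0 b), (Rlt_dec b 0);
  intros; repeat split; intros; lra.
Qed.

Lemma reaction_sum_ext rxns f g s : (forall r, f r = g r) ->
  reaction_sum rxns f s = reaction_sum rxns g s.
Proof.
  intros H; unfold reaction_sum; f_equal; apply map_ext; intros; rewrite H; auto.
Qed.

Lemma mono_pos l (x F : Vec) :
  0 < fold_right Rmult 1 (map (fun s => Rpower (x s) (F s)) l).
Proof.
  induction l; simpl. lra. apply Rmult_lt_0_compat; auto. unfold Rpower; apply exp_pos.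
Qed.

Lemma mono_rel l (c1 c2 F mu : Vec) :
  (forall s, In s l -> ln (c1 s) = ln (c2 s) + mu s) ->
  fold_right Rmult 1 (map (fun s => Rpower (c1 s) (F s)) l) =
  fold_right Rmult 1 (map (fun s => Rpower (c2 s) (F s)) l) *
  exp (sumR (map (fun s => F s * mu s) l)).
Proof.
  induction l; simpl; intros H.
  - rewrite exp_0; lra.
  - rewrite IHl by (intros; apply H; auto).
    unfold Rpower. rewrite (H a) by auto.
    rewrite exp_plus.
    replace (F a * (ln (c2 a) + mu a)) with (F a * ln (c2 a) + F a * mu a) by ring.
    rewrite exp_plus. ring.
Qed.

Theorem lemma2p2 (n : nat) (rxns : list Reaction) (T : Vec -> Vec)
    (kappa : Reaction -> R) (mu : Vec) :
  is_network n rxns ->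
  (forall r, In r rxns -> 0 < kappa r) ->
  (exists s, (s < n)%nat /\ mu s <> 0) ->
  sign_compatible n rxns mu ->
  (forall s, (s < n)%nat -> reaction_sum rxns kappa s = 0) ->
  (forall s, (s < n)%nat ->
     reaction_sum rxns (fun r => kappa r * exp (dot n (T (fst r)) mu)) s = 0) ->
  exists (k : Reaction -> R) (c1 c2 : Vec),
    (forall r, In r rxns -> 0 < k r) /\
    (forall s, (s < n)%nat -> 0 < c1 s /\ 0 < c2 s) /\
    (exists s, (s < n)%nat /\ c1 s <> c2 s) /\
    in_stoich n rxns (fun s => c1 s - c2 s) /\
    is_equilibrium n rxns T k c1 /\
    is_equilibrium n rxns T k c2.
Proof.
  intros _ Hk [s0 [Hs0 Hmu0]] [sigma [[a Ha] Hsg]] H1 H2.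
  set (c2 := fun s => if Req_EM_T (mu s) 0 then 1 else sigma s / (exp (mu s) - 1)).
  set (c1 := fun s => if Req_EM_T (mu s) 0 then 1
                      else sigma s * exp (mu s) / (exp (mu s) - 1)).
  assert (Hpos : forall s, (s < n)%nat -> 0 < c1 s /\ 0 < c2 s).
  { intros s Hs. destruct (sgn_eq _ _ (Hsg s Hs)) as [P [N Z]].
    unfold c1, c2; destruct (Req_EM_T (mu s) 0). lra.
    destruct (Rlt_or_le 0 (mu s)) as [Hm|Hm].
    - assert (1 < exp (mu s)) by (rewrite <- exp_0; apply exp_increasing; auto).
      specialize (P Hm). pose proof (exp_pos (mu s)).
      split; unfold Rdiv; repeat apply Rmult_lt_0_compat; auto;
        apply Rinv_0_lt_compat; lra.
    - assert (Hm' : mu s < 0) by lra.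
      assert (exp (mu s) < 1) by (rewrite <- exp_0; apply exp_increasing; auto).
      specialize (N Hm'). pose proof (exp_pos (mu s)).
      split; unfold Rdiv.
      + replace (sigma s * exp (mu s) * / (exp (mu s) - 1)) with
          ((- sigma s) * exp (mu s) * / (1 - exp (mu s))) by (field; lra).
        repeat apply Rmult_lt_0_compat; try lra. apply Rinv_0_lt_compat; lra.
      + replace (sigma s * / (exp (mu s) - 1)) with
          ((- sigma s) * / (1 - exp (mu s))) by (field; lra).
        apply Rmult_lt_0_compat; try lra. apply Rinv_0_lt_compat; lra. }
  assert (Hdiff : forall s, (s < n)%nat -> c1 s - c2 s = sigma s).
  { intros s Hs. destruct (sgn_eq _ _ (Hsg s Hs)) as [P [N Z]].
    unfold c1, c2; destruct (Req_EM_T (mu s) 0). rewrite Z; auto; lra.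
    assert (exp (mu s) <> 1).
    { intro E. apply n0. apply (f_equal ln) in E. rewrite ln_exp, ln_1 in E. exact E. }
    field. lra. }
  assert (Hln : forall s, (s < n)%nat -> ln (c1 s) = ln (c2 s) + mu s).
  { intros s Hs. destruct (Hpos s Hs) as [p1 p2].
    assert (c1 s = c2 s * exp (mu s)).
    { unfold c1, c2 in *; destruct (Req_EM_T (mu s) 0).
      rewrite e, exp_0; ring.
      assert (exp (mu s) <> 1).
      { intro E. apply n0. apply (f_equal ln) in E. rewrite ln_exp, ln_1 in E. exact E. }
      field. lra. }
    rewrite H, ln_mult, ln_exp; auto. apply exp_pos. }
  set (m2 := fun F => monomial n c2 F).
  exists (fun r => kappa r / m2 (T (fst r))), c1, c2.
  assert (Hm2 : forall F, 0 < m2 F) by (intros; apply mono_pos).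
  split; [|split; [exact Hpos|split; [|split; [|split]]]].
  - intros r Hr. unfold Rdiv. apply Rmult_lt_0_compat; auto.
    apply Rinv_0_lt_compat; auto.
  - exists s0. split; auto.
    intro E. pose proof (Hdiff s0 Hs0).
    assert (sigma s0 = 0) by lra.
    specialize (Hsg s0 Hs0). rewrite H0 in Hsg.
    revert Hsg; unfold sgn; destruct (Rlt_dec 0 (mu s0)), (Rlt_dec (mu s0) 0),
      (Rlt_dec 0 0); intros; lra.
  - exists a. intros s Hs. rewrite Hdiff; auto.
  - intros s Hs. unfold plrdk_rhs. rewrite <- (H2 s Hs).
    apply reaction_sum_ext. intros r.
    unfold monomial, m2, monomial. rewrite (mono_rel _ c1 c2 _ mu).
    + unfold dot. field. apply Rgt_not_eq, Hm2.
    + intros s' Hs'. apply in_seq in Hs'. apply Hln. lia.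
  - intros s Hs. unfold plrdk_rhs. rewrite <- (H1 s Hs).
    apply reaction_sum_ext. intros r. unfold m2. field.
    apply Rgt_not_eq, Hm2.
Qed.
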